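(* On the category $\mathrm{Diff}$ of diffeological spaces the following relations hold among the Grothendieck topologies $T_{numDop},T_{Dop},T_{suDld},T_{suDsu},T_{Dlsplit},T_{susu},T_{sudu}$: $T_{numDop}\prec T_{Dop}$; $T_{Dop}\sim T_{suDld}$; $T_{suDld}\subset T_{suDsu}$ and $T_{suDld}\sim T_{suDsu}$; $T_{suDsu}\subset T_{Dlsplit}$ and $T_{suDsu}\sim T_{Dlsplit}$; $T_{Dlsplit}\subset T_{sudu}$; $T_{suDsu}\subset T_{susu}\subset T_{sudu}$.
   Context: A diffeological space is a set $X$ with a collection of maps $c:U\to X$ (''plots''), $U$ ranging over open subsets of $\mathbb{R}^n$ ($n\ge0$), such that constant maps are plots, $c\circ f$ is a plot for any plot $c:V\to X$ and smooth $f:U\to V$, and a map that is locally a plot (on an open cover, with agreeing restrictions) is a plot. Smooth maps send plots to plots (by composition); $\mathrm{Diff}$ is the resulting category. A subset $A\subset X$ is D-open if its preimage under every plot is open; subsets carry the subspace diffeology. Classes of smooth maps $\pi:Y\to X$: subduction — for every plot $c:U\to X$ and $x\in U$ there are an open $x\in U_x\subset U$ and smooth $\sigma:U_x\to Y$ with $\pi\circ\sigma=c|_{U_x}$; submersion — for all $y\in Y$, plots $c:U\to X$ and $x\in U$ with $c(x)=\pi(y)$, such $U_x,\sigma$ exist additionally with $\sigma(x)=y$; D-local diffeomorphism — each $y$ has a D-open neighbourhood $A$ with $\pi(A)$ D-open and $\pi|_A:A\to\pi(A)$ a diffeomorphism; D-submersion — for every $y\in Y$ there are a D-open neighbourhood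 $A$ of $\pi(y)$ and smooth $\sigma:A\to Y$ with $\pi\circ\sigma=\mathrm{id}_A$, $\sigma(\pi(y))=y$; D-locally split — every $x\in X$ has a D-open neighbourhood $A$ with smooth $\sigma:A\to Y$, $\pi\circ\sigma=\mathrm{id}_A$. A D-open cover of $X$ is a family $(\pi_i:X_i\to X)$ of smooth maps with D-open images $A_i$ covering $X$ and $\pi_i:X_i\to A_i$ diffeomorphisms; numerable if $(A_i)$ is a numerable open cover for the D-topology. Grothendieck topologies (coverings): $T_{numDop}$ numerable D-open covers; $T_{Dop}$ D-open covers; $T_{suDld}$ single surjective D-local diffeomorphisms; $T_{suDsu}$ single surjective D-submersions; $T_{Dlsplit}$ single D-locally split maps; $T_{susu}$ single surjective submersions; $T_{sudu}$ single subductions. A morphism is universal if its pullback along every morphism exists; $\pi$ is $T$-locally split if there is a $T$-covering $(\pi_i:U_i\to X)$ and $\rho_i:U_i\to Y$ with $\pi\circ\rho_i=\pi_i$. $T_1\prec T_2$: every universal $T_1$-locally split morphism is $T_2$-locally split; $T_1\sim T_2$: $\prec$ both ways; $T_1\subset T_2$: every $T_1$-covering is a $T_2$-covering. *)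

(* Defs.v *)
From HB Require Import structures.
From mathcomp Require Import all_boot all_order all_algebra.
From mathcomp Require Import all_classical all_reals all_analysis.
From Stdlib Require List.
Import numFieldNormedType.Exports.

Set Implicit Arguments.
Unset Strict Implicit.
Unset Printing Implicit Defensive.

Local Open Scope classical_set_scope.
Local Open Scope ring_scope.

Section Diffeology.
Context {R : realType}.

Fixpoint iter_derive (n m : nat) (l : seq 'rV[R]_n) (g : 'rV[R]_n -> 'rV[R]_m)
  : 'rV[R]_n -> 'rV[R]_m :=
  match l with
  | [::] => g
  | v :: l' => fun x => derive (iter_derive l' g) x v
  end.

Definition smooth_on (n m : nat) (U : set 'rV[R]_n) (g : 'rV[R]_n -> 'rV[R]_m) :=
  forall (l : seq 'rV[R]_n) (x : 'rV[R]_n), U x ->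
    {for x, continuous (iter_derive l g)} /\
    (forall v : 'rV[R]_n, derivable (iter_derive l g) x v).

Definition smooth_dom (n m : nat) (U : set 'rV[R]_n) (V : set 'rV[R]_m)
    (f : U -> V) :=
  exists g : 'rV[R]_n -> 'rV[R]_m,
    smooth_on U g /\ forall x : U, val (f x) = g (val x).

Definition incl_dom (T : Type) (W U : set T) (h : W `<=` U) : W -> U :=
  fun x => exist _ (val x) (mem_set (h _ (set_mem (valP x)))).

Record diffspace := DiffSpace {
  carrier :> Type;
  plot : forall (n : nat) (U : set 'rV[R]_n), (U -> carrier) -> Prop;
  plot_open : forall n (U : set 'rV[R]_n) (c : U -> carrier), plot c -> open U;
  plot_const : forall n (U : set 'rV[R]_n) (x0 : carrier),
      open U -> plot (fun _ : U => x0);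
  plot_comp : forall n m (U : set 'rV[R]_n) (V : set 'rV[R]_m)
      (c : V -> carrier) (f : U -> V),
      plot c -> open U -> smooth_dom f -> plot (c \o f);
  plot_local : forall n (U : set 'rV[R]_n) (c : U -> carrier),
      open U ->
      (forall x, U x -> exists (W : set 'rV[R]_n) (h : W `<=` U),
          [/\ open W, W x & plot (c \o incl_dom h)]) ->
      plot c
}.

Definition smooth (X Y : diffspace) (f : X -> Y) :=
  forall n (U : set 'rV[R]_n) (c : U -> X), plot c -> plot (f \o c).

Definition Dopen (X : diffspace) (A : set X) :=
  forall n (U : set 'rV[R]_n) (c : U -> X), plot c ->
    open [set x : 'rV[R]_n | exists h : x \in U, A (c (exist _ x h))].

Definition Dclosure (X : diffspace) (S : set X) : set X :=
  [set x | forall W : set X, Dopen W -> W x -> exists2 y, W y & S y].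

Definition Dcontinuous (X : diffspace) (phi : X -> R) :=
  forall O : set R, open O -> Dopen (phi @^-1` O).

Section Subspace.
Variables (X : diffspace) (A : set X).

Definition sub_plot n (U : set 'rV[R]_n) (c : U -> A) := plot (val \o c).

Lemma sub_plot_open n (U : set 'rV[R]_n) (c : U -> A) : sub_plot c -> open U.
Proof. exact: plot_open. Qed.

Lemma sub_plot_const n (U : set 'rV[R]_n) (x0 : A) :
  open U -> sub_plot (fun _ : U => x0).
Proof. exact: (plot_const (val x0)). Qed.

Lemma sub_plot_comp n m (U : set 'rV[R]_n) (V : set 'rV[R]_m)
   (c : V -> A) (f : U -> V) : sub_plot c -> open U -> smooth_dom f ->
   sub_plot (c \o f).
Proof. exact: plot_comp. Qed.

Lemma sub_plot_local n (U : set 'rV[R]_n) (c : U -> A) : open U ->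
  (forall x, U x -> exists (W : set 'rV[R]_n) (h : W `<=` U),
      [/\ open W, W x & sub_plot (c \o incl_dom h)]) -> sub_plot c.
Proof. exact: plot_local. Qed.

Definition subspace : diffspace :=
  @DiffSpace A sub_plot sub_plot_open sub_plot_const sub_plot_comp sub_plot_local.
End Subspace.

Definition diffeo_onto (Z X : diffspace) (f : Z -> X) (B : set X) :=
  [/\ smooth f, f @` setT = B &
      exists g : subspace B -> Z, smooth g /\
        (forall b : subspace B, f (g b) = val b) /\
        (forall (z : Z) (h : f z \in B), g (exist _ (f z) h) = z)].

Section Maps.
Variables (Y X : diffspace) (p : Y -> X).

Definition subduction :=
  smooth p /\
  forall n (U : set 'rV[R]_n) (c : U -> X), plot c ->
    forall x : U, exists (Ux : set 'rV[R]_n) (h : Ux `<=` U),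
      Ux (val x) /\ open Ux /\
      exists sigma : Ux -> Y, plot sigma /\ p \o sigma = c \o incl_dom h.

Definition submersion :=
  smooth p /\
  forall (y : Y) n (U : set 'rV[R]_n) (c : U -> X), plot c ->
    forall x : U, c x = p y -> exists (Ux : set 'rV[R]_n) (h : Ux `<=` U),
      Ux (val x) /\ open Ux /\
      exists sigma : Ux -> Y, plot sigma /\ p \o sigma = c \o incl_dom h /\
        (forall hx : val x \in Ux, sigma (exist _ (val x) hx) = y).

Definition D_local_diffeo :=
  smooth p /\
  forall y : Y, exists A : set Y, [/\ Dopen A, A y, Dopen (p @` A) &
      diffeo_onto (fun a : subspace A => p (val a)) (p @` A)].

Definition D_submersion :=
  smooth p /\
  forall y : Y, exists A : set X, [/\ Dopen A, A (p y) &
      exists sigma : subspace A -> Y, [/\ smooth sigma,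
        (forall a : subspace A, p (sigma a) = val a) &
        (forall h : p y \in A, sigma (exist _ (p y) h) = y)]].

Definition D_locally_split :=
  smooth p /\
  forall x : X, exists A : set X, [/\ Dopen A, A x &
      exists sigma : subspace A -> Y, smooth sigma /\
        (forall a : subspace A, p (sigma a) = val a)].

End Maps.

Record family (X : diffspace) := Family {
  fidx : Type;
  fdom : fidx -> diffspace;
  fmap : forall i, fdom i -> X;
  fmap_smooth : forall i, smooth (@fmap i)
}.
Arguments fidx {X} f.
Arguments fdom {X} f i.
Arguments fmap {X} f i _.

Definition coverage := forall X : diffspace, family X -> Prop.

Definition single_family (X : diffspace) (F : family X) :=
  exists i0 : fidx F, forall i, i = i0.

Definition D_open_cover (X : diffspace) (F : family X) :=
  (forall x : X, exists i, exists u, fmap F i u = x) /\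
  forall i, Dopen (fmap F i @` setT) /\
            diffeo_onto (fmap F i) (fmap F i @` setT).

Definition sum_list (I : Type) (s : list I) (f : I -> R) : R :=
  List.fold_right (fun i acc => f i + acc) 0 s.

(* Dold: an open cover (A_i) is numerable if it admits a locally finite
   partition of unity (phi_i) with closure(phi_i^{-1}(R\{0})) <= A_i;
   here for the D-topology *)
Definition numerable_cover (X : diffspace) (I : Type) (A : I -> set X) :=
  exists phi : I -> X -> R,
    [/\ forall i, Dcontinuous (phi i),
        forall i x, 0 <= phi i x,
        forall i, Dclosure [set x | phi i x != 0] `<=` A i,
        forall x : X, exists W : set X, [/\ Dopen W, W x &
            exists s : list I, forall i, (exists2 w, W w & phi i w != 0) -> List.In i s] &
        forall x : X, exists s : list I, [/\ List.NoDup s,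
            forall i, phi i x != 0 -> List.In i s & sum_list s (fun i => phi i x) = 1]].

Definition T_numDop : coverage := fun X F =>
  D_open_cover F /\ numerable_cover (fun i => fmap F i @` setT).
Definition T_Dop : coverage := fun X F => D_open_cover F.
Definition T_suDld : coverage := fun X F => single_family F /\
  forall i, D_local_diffeo (fmap F i) /\ fmap F i @` setT = setT.
Definition T_suDsu : coverage := fun X F => single_family F /\
  forall i, D_submersion (fmap F i) /\ fmap F i @` setT = setT.
Definition T_Dlsplit : coverage := fun X F => single_family F /\
  forall i, D_locally_split (fmap F i).
Definition T_susu : coverage := fun X F => single_family F /\
  forall i, submersion (fmap F i) /\ fmap F i @` setT = setT.
Definition T_sudu : coverage := fun X F => single_family F /\
  forall i, subduction (fmap F i).

Definition is_pullback (X Y Z P : diffspace) (f : X -> Z) (g : Y -> Z)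
    (p1 : P -> X) (p2 : P -> Y) :=
  [/\ smooth p1, smooth p2, (forall q, f (p1 q) = g (p2 q)) &
      forall (Q : diffspace) (q1 : Q -> X) (q2 : Q -> Y),
        smooth q1 -> smooth q2 -> (forall q, f (q1 q) = g (q2 q)) ->
        exists u : Q -> P, [/\ smooth u, p1 \o u = q1, p2 \o u = q2 &
          forall u' : Q -> P, smooth u' -> p1 \o u' = q1 -> p2 \o u' = q2 ->
            u' = u]].

Definition universal (Y X : diffspace) (p : Y -> X) :=
  smooth p /\
  forall (X' : diffspace) (f : X' -> X), smooth f ->
    exists (P : diffspace) (p1 : P -> Y) (p2 : P -> X'), is_pullback p f p1 p2.

Definition locally_split (T : coverage) (Y X : diffspace) (p : Y -> X) :=
  exists F : family X, T X F /\
    exists rho : forall i, fdom F i -> Y,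
      (forall i, smooth (rho i)) /\ (forall i u, p (rho i u) = fmap F i u).

Definition cov_prec (T1 T2 : coverage) :=
  forall (Y X : diffspace) (p : Y -> X),
    universal p -> locally_split T1 p -> locally_split T2 p.
Definition cov_sim (T1 T2 : coverage) := cov_prec T1 T2 /\ cov_prec T2 T1.
Definition cov_sub (T1 T2 : coverage) := forall X (F : family X), T1 X F -> T2 X F.

End Diffeology.

(* Main.v *)
Require Import Defs.
From mathcomp Require Import all_boot all_order all_algebra.
From mathcomp Require Import all_classical all_reals all_analysis.
Import numFieldNormedType.Exports.
Set Implicit Arguments.
Unset Strict Implicit.
Unset Printing Implicit Defensive.
Local Open Scope classical_set_scope.
Local Open Scope ring_scope.

Section Aux.
Context {R : realType}.
Local Notation diffspace := (@Defs.diffspace R).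
Local Notation subspace A := (@Defs.subspace R _ A).

Lemma iter_derive_id n (l : seq 'rV[R]_n) :
  iter_derive l id = id \/ exists k : 'rV[R]_n, iter_derive l id = cst k.
Proof.
elim: l => [|v l [IH|[k IH]]] /=; first by left.
- right; exists v; apply: funext => x; by rewrite IH derive_id.
- right; exists 0; apply: funext => x; by rewrite IH derive_cst.
Qed.

Lemma smooth_on_id n (U : set 'rV[R]_n) : smooth_on U id.
Proof.
move=> l x _; case: (iter_derive_id l) => [->|[k ->]]; split.
- exact: cvg_id.
- move=> v; exact: derivable_id.
- exact: cst_continuous.
- move=> v; exact: derivable_cst.
Qed.

Lemma smooth_dom_incl n (W U : set 'rV[R]_n) (h : W `<=` U) :
  smooth_dom (incl_dom h).
Proof. exists id; split; [exact: smooth_on_id| by []]. Qed.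


Section Pre.
Variables (X : diffspace) (n : nat) (U : set 'rV[R]_n) (c : U -> X) (A : set X).

Lemma c_irr y (h1 h2 : y \in U) : c (exist _ y h1) = c (exist _ y h2).
Proof. by rewrite (bool_irrelevance h1 h2). Qed.

Definition pre := [set y | exists h : y \in U, A (c (exist _ y h))].
Lemma pre_sub : pre `<=` U.
Proof. by move=> y [h _]; apply: set_mem. Qed.

Lemma pre_in (w : pre) : c (incl_dom pre_sub w) \in A.
Proof.
apply: mem_set; case: w => y hy /=; case: (set_mem hy) => h Ah; by rewrite (c_irr _ h).
Qed.

Definition cres (w : pre) : subspace A := exist (fun x => x \in A) _ (pre_in w).

Lemma pre_open : plot c -> Dopen A -> open pre.
Proof. by move=> pc DA; apply: DA. Qed.

Lemma cres_plot : plot c -> Dopen A -> plot cres.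
Proof.
move=> pc DA; rewrite /= /sub_plot.
exact: (plot_comp pc (pre_open pc DA) (smooth_dom_incl pre_sub)).
Qed.

Lemma pre_val (x : U) : A (c x) -> pre (val x).
Proof. case: x => y h /= Ay; by exists h. Qed.
End Pre.

Lemma smooth_comp (X Y Z : diffspace) (f : X -> Y) (g : Y -> Z) :
  smooth f -> smooth g -> smooth (g \o f).
Proof. by move=> sf sg n U c pc; apply: sg; apply: sf. Qed.

Lemma smooth_val (X : diffspace) (A : set X) : smooth (fun a : subspace A => val a).
Proof. by move=> n U c pc. Qed.

Lemma Dlsplit_subduction (Y X : diffspace) (p : Y -> X) :
  D_locally_split p -> subduction p.
Proof.
case=> sp H; split => // n U c pc x.
have [A [DA Ax [sigma [ss Hs]]]] := H (c x).
exists (pre c A), (pre_sub (c:=c) (A:=A)); split; first exact: pre_val.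
split; first exact: pre_open.
exists (sigma \o cres (c:=c) (A:=A)); split; first exact: ss (cres_plot pc DA).
by apply: funext => w /=; rewrite Hs.
Qed.

Lemma suDsu_submersion (Y X : diffspace) (p : Y -> X) :
  D_submersion p -> p @` setT = setT -> submersion p.
Proof.
case=> sp H surj; split => // y n U c pc x cx.
have [A [DA Ay [sigma [ss Hs Hy]]]] := H y.
exists (pre c A), (pre_sub (c:=c) (A:=A)); split.
  by apply: pre_val; rewrite cx.
split; first exact: pre_open.
exists (sigma \o cres (c:=c) (A:=A)); split; first exact: ss (cres_plot pc DA).
split; first by apply: funext => w /=; rewrite Hs.
move=> hx /=; rewrite /cres.
have key : forall e (pf : e \in A), e = p y -> sigma (exist _ e pf) = y.
  by move=> e pf E; subst e; apply: Hy.
apply: key; rewrite /incl_dom /=.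
by case: x cx hx => z hz /= <- hx; apply: c_irr.
Qed.

Lemma susu_subduction (Y X : diffspace) (p : Y -> X) :
  submersion p -> p @` setT = setT -> subduction p.
Proof.
case=> sp H surj; split => // n U c pc x.
have : (p @` setT) (c x) by rewrite surj.
case=> y _ pyx.
have [Ux [h [Uxx [oU [sigma [ps [e _]]]]]]] := H y n U c pc x (esym pyx).
by exists Ux, h; split => //; split => //; exists sigma.
Qed.

Lemma suDld_suDsu (Y X : diffspace) (p : Y -> X) :
  D_local_diffeo p -> D_submersion p.
Proof.
case=> sp H; split => // y.
have [A [DA Ay DpA [_ _ [g [sg [Hg1 Hg2]]]]]] := H y.
exists (p @` A); split => //.
exists (fun b => val (g b)); split.
- exact: (smooth_comp sg (@smooth_val _ A)).
- by move=> a; rewrite Hg1.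
- move=> h; have := Hg2 (exist _ y (mem_set Ay)) h => /= ->; done.
Qed.

Lemma suDsu_Dlsplit (Y X : diffspace) (p : Y -> X) :
  D_submersion p -> p @` setT = setT -> D_locally_split p.
Proof.
case=> sp H surj; split => // x.
have : (p @` setT) x by rewrite surj.
case=> y _ <-.
have [A [DA Ay [sigma [ss Hs _]]]] := H y.
by exists A; split => //; exists sigma.
Qed.



Lemma smooth_dom_cont n m (U : set 'rV[R]_n) (V : set 'rV[R]_m) (f : U -> V)
  (O : set 'rV[R]_m) : open U -> smooth_dom f -> open O -> forall u : U,
  O (val (f u)) ->
  exists P : set 'rV[R]_n, [/\ open P, P (val u) &
    forall u' : U, P (val u') -> O (val (f u'))].
Proof.
move=> oU [g [sm e]] oO u Ou.
exists (U `&` g @^-1` O); split.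
- rewrite openE => x [Ux Ogx].
  have [cont _] := sm [::] x Ux.
  apply: filterI; first exact: open_nbhs_nbhs.
  apply: cont; exact: open_nbhs_nbhs.
- split; first exact: (set_mem (valP u)).
  by rewrite /preimage /= -e.
- by move=> u' [_ P]; rewrite e.
Qed.

Lemma incl_eq n (W U : set 'rV[R]_n) (h : W `<=` U) (w : W) (v : U) :
  val w = val v -> incl_dom h w = v.
Proof.
case: v => y hy; case: w => z hz /= e; subst z; rewrite /incl_dom /=.
congr exist; apply: bool_irrelevance.
Qed.


Section Coprod.
Variables (X : diffspace) (I : Type) (A : I -> set X).

Definition Wc := {ix : I * X | A ix.1 ix.2}.

Definition Wplot n (U : set 'rV[R]_n) (c : U -> Wc) :=
  plot (fun u => (sval (c u)).2) /\
  forall u : U, exists V : set 'rV[R]_n, [/\ open V, V (val u) &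
     forall v : U, V (val v) -> (sval (c v)).1 = (sval (c u)).1].

Lemma Wplot_open n (U : set 'rV[R]_n) (c : U -> Wc) : Wplot c -> open U.
Proof. by case=> pc _; apply: plot_open pc. Qed.

Lemma Wplot_const n (U : set 'rV[R]_n) (x0 : Wc) :
  open U -> Wplot (fun _ : U => x0).
Proof.
move=> oU; split; first exact: plot_const.
by move=> u; exists setT; split => //; exact: openT.
Qed.

Lemma Wplot_comp n m (U : set 'rV[R]_n) (V : set 'rV[R]_m)
   (c : V -> Wc) (f : U -> V) : Wplot c -> open U -> smooth_dom f ->
   Wplot (c \o f).
Proof.
move=> [pc Hc] oU sf; split; first exact: (plot_comp pc oU sf).
move=> u; have [Ob [oO Ou HO]] := Hc (f u).
have [P [oP Pu HP]] := smooth_dom_cont oU sf oO Ou.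
exists P; split => // v Pv /=.
by rewrite (HO _ (HP _ Pv)).
Qed.

Lemma Wplot_local n (U : set 'rV[R]_n) (c : U -> Wc) : open U ->
  (forall x, U x -> exists (W : set 'rV[R]_n) (h : W `<=` U),
      [/\ open W, W x & Wplot (c \o incl_dom h)]) -> Wplot c.
Proof.
move=> oU Hl; split.
  apply: (@plot_local R X n U _ oU) => x Ux.
  have [W [h [oW Wx [pW _]]]] := Hl x Ux.
  by exists W, h; split.
move=> u; have [W [h [oW Wu [_ HW]]]] := Hl (val u) (set_mem (valP u)).
have [V [oV Vu HV]] := HW (exist _ (val u) (mem_set Wu)).
exists (V `&` W); split; first exact: openI.
  by split.
move=> v [Vv Wv].
have := HV (exist _ (val v) (mem_set Wv)) Vv => /=.
rewrite (@incl_eq _ _ _ h (exist _ (val v) (mem_set Wv)) v) //.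
by rewrite (@incl_eq _ _ _ h (exist _ (val u) (mem_set Wu)) u).
Qed.

Definition Wsp : diffspace :=
  @DiffSpace R Wc Wplot Wplot_open Wplot_const Wplot_comp Wplot_local.

Definition q (w : Wsp) : X := (sval w).2.

Lemma q_smooth : smooth q.
Proof. by move=> n U c [pc _]. Qed.

Definition At (i : I) : set Wsp := [set w | (sval w).1 = i].

Lemma At_Dopen i : Dopen (At i).
Proof.
move=> n U c pc; have oU := Wplot_open pc.
rewrite openE => x [h e].
have [V [oV Vx HV]] := pc.2 (exist _ x h).
apply: (@filterS _ _ _ (V `&` U)).
  move=> y [Vy Uy]; exists (mem_set Uy); rewrite /At /=.
  by rewrite (HV (exist _ y (mem_set Uy)) Vy).
by apply: filterI; apply: open_nbhs_nbhs; split => //; apply: set_mem.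
Qed.

Lemma qAt i : q @` At i = A i.
Proof.
apply/seteqP; split.
  by move=> x [w Aw <-]; move: (proj2_sig w); rewrite /q Aw.
move=> x Ax; by exists (exist _ (i, x) Ax).
Qed.

Lemma qAt_in i (b : subspace (q @` At i)) : A i (val b).
Proof. by rewrite -(qAt i); apply: set_mem (valP b). Qed.

Definition gAt i (b : subspace (q @` At i)) : subspace (At i) :=
  exist (fun w => w \in At i)
    (exist (fun ix : I * X => A ix.1 ix.2) (i, val b) (qAt_in b))
    (mem_set (erefl i)).

Lemma q_Dld (DA : forall i, Dopen (A i)) : D_local_diffeo q.
Proof.
split; first exact: q_smooth.
move=> w; exists (At (sval w).1); split => //.
- exact: At_Dopen.
- by rewrite qAt.
split.
- exact: (smooth_comp (@smooth_val _ (At (sval w).1)) q_smooth).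
- apply/seteqP; split.
    by move=> x [a _ <-]; exists (val a) => //; apply: set_mem (valP a).
  by move=> x [w' Aw' <-]; exists (exist _ w' (mem_set Aw')).
exists (@gAt (sval w).1); split.
  move=> n U c pc; split; first exact: pc.
  by move=> u; exists setT; split => //; exact: openT.
split; first by [].
move=> z h; case: z h => [[[j x] Ajx] hz] h /=.
apply: eq_exist; apply: eq_exist => /=.
by have := set_mem hz; rewrite /At /= => e; rewrite /q /= e.
Qed.

Lemma q_surj (cov : forall x, exists i, A i x) : q @` setT = setT.
Proof.
apply/seteqP; split => // x _; have [i Ax] := cov x.
by exists (exist _ (i, x) Ax).
Qed.

Local Unset Implicit Arguments.
Variables (Y : diffspace) (p : Y -> X) (s : forall i, subspace (A i) -> Y).
Hypothesis s_smooth : forall i : I, smooth (s i).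
Hypothesis s_sec : forall (i : I) (a : subspace (A i)), p (s i a) = val a.

Definition wlift (w : Wsp) : Y :=
  s (sval w).1 (exist (fun x => x \in A (sval w).1) (sval w).2 (mem_set (proj2_sig w))).

Lemma s_congr j k (e : j = k) x (p1 : x \in A j) (p2 : x \in A k) :
  s j (exist _ x p1) = s k (exist _ x p2).
Proof. subst k; by rewrite (bool_irrelevance p1 p2). Qed.

Lemma lift_sec w : p (wlift w) = q w.
Proof. by rewrite /wlift s_sec. Qed.

Lemma lift_smooth : smooth wlift.
Proof.
move=> n U c pc; have oU := Wplot_open pc.
apply: (@plot_local R Y n U _ oU) => x Ux.
have [V [oV Vx HV]] := pc.2 (exist _ x (mem_set Ux)).
set i := (sval (c (exist _ x (mem_set Ux)))).1 in HV.
have h : V `&` U `<=` U by move=> y [].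
exists (V `&` U), h; split; [exact: openI | by [] |].
have pf : forall w : V `&` U, (sval (c (incl_dom h w))).2 \in A i.
  move=> w; apply: mem_set.
  have := proj2_sig (c (incl_dom h w)); rewrite (HV (incl_dom h w)) //.
  by case: (set_mem (valP w)).
pose c2 (w : V `&` U) : subspace (A i) := exist (fun y => y \in A i) _ (pf w).
have -> : wlift \o c \o incl_dom h = s i \o c2.
  apply: funext => w /=; rewrite /wlift; apply: s_congr.
  apply: HV; by case: (set_mem (valP w)).
apply: s_smooth.
exact: (plot_comp pc.1 (openI oV oU) (smooth_dom_incl h)).
Qed.

End Coprod.



Section Sec.
Local Unset Implicit Arguments.
Variables (Y X : diffspace) (p : Y -> X).

Definition secdata := forall x : X, exists B : set X, [/\ Dopen B, B x &
  exists s : subspace B -> Y, smooth s /\ forall a, p (s a) = val a].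

Record sec := Sec { sB : set X; ss : subspace sB -> Y; sD : Dopen sB;
  ssm : smooth ss; ssp : forall a, p (ss a) = val a }.

Hypothesis H : secdata.

Lemma sec_cov : forall x, exists i : sec, sB i x.
Proof.
move=> x; have [B [DB Bx [s [sm sp]]]] := H x.
by exists (Sec B s DB sm sp).
Qed.

Lemma secdata_suDld : locally_split (@T_suDld R) p.
Proof.
exists (@Family R X unit (fun _ => Wsp sB) (fun _ => @q X sec sB)
  (fun _ => @q_smooth X sec sB)).
split.
  split; first by exists tt; case.
  move=> i0; split; [exact: q_Dld sD | exact: q_surj sec_cov].
exists (fun _ => wlift X sec sB Y ss); split => [i0|i0 w].
  exact: (lift_smooth X sec sB Y ss ssm).
exact: (lift_sec X sec sB Y p ss ssp).
Qed.

Lemma val_img (B : set X) : (fun a : subspace B => val a) @` setT = B.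
Proof.
apply/seteqP; split; first by move=> x [a _ <-]; apply: set_mem (valP a).
by move=> x Bx; exists (exist (fun y => y \in B) x (mem_set Bx)).
Qed.

Lemma val_img_in (B : set X) (b : subspace ((fun a : subspace B => val a) @` setT)) :
  val b \in B.
Proof. case: b => y /= /set_mem [a _ <-]; exact: (proj2_sig a). Qed.

Lemma secdata_Dop : locally_split (@T_Dop R) p.
Proof.
exists (@Family R X sec (fun i => subspace (sB i)) (fun i a => val a)
  (fun i => @smooth_val X (sB i))).
split.
  split.
    move=> x; have [i Bx] := sec_cov x.
    by exists i, (exist (fun y => y \in sB i) x (mem_set Bx)).
  move=> i; split; first by rewrite /= val_img; exact: sD.
  split; [exact: smooth_val | by [] |].
  exists (fun b => exist (fun y => y \in sB i) (val b) (val_img_in (sB i) b)).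
  split; first by move=> n U c pc.
  split => // z h; apply: val_inj => //.
exists ss; split => [i|i a]; [exact: ssm | exact: ssp].
Qed.

End Sec.


Lemma sub_ls (T1 T2 : @coverage R) (Y X : diffspace) (p : Y -> X) :
  cov_sub T1 T2 -> locally_split T1 p -> locally_split T2 p.
Proof. by move=> S [F [HF rest]]; exists F; split => //; apply: S. Qed.

Lemma sub_prec (T1 T2 : @coverage R) : cov_sub T1 T2 -> cov_prec T1 T2.
Proof. by move=> S Y X p _; apply: sub_ls. Qed.

Lemma from_Dop (Y X : diffspace) (p : Y -> X) :
  locally_split (@T_Dop R) p -> secdata Y X p.
Proof.
case=> F [[cov Hi] [rho [rs rp]]] x.
have [i [u e]] := cov x.
have [DB [sm _ [g [sg [g1 _]]]]] := Hi i.
exists ((@Defs.fmap R X F i) @` setT); split => //; try by exists u.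
exists (rho i \o g); split; first exact: smooth_comp sg (rs i).
by move=> b /=; rewrite rp g1.
Qed.

Lemma from_suDld (Y X : diffspace) (p : Y -> X) :
  locally_split (@T_suDld R) p -> secdata Y X p.
Proof.
case=> F [[[i0 _] Hi] [rho [rs rp]]] x.
have [[_ HD] surj] := Hi i0.
have : ((@Defs.fmap R X F i0) @` setT) x by rewrite surj.
case=> z _ <-.
have [A [DA Az DqA [_ _ [g [sg [g1 _]]]]]] := HD z.
exists ((@Defs.fmap R X F i0) @` A); split => //; try by exists z.
exists (rho i0 \o (fun a : subspace A => val a) \o g); split.
  exact: smooth_comp (smooth_comp sg (@smooth_val _ A)) (rs i0).
by move=> b /=; rewrite rp g1.
Qed.

Lemma from_Dlsplit (Y X : diffspace) (p : Y -> X) :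
  locally_split (@T_Dlsplit R) p -> secdata Y X p.
Proof.
case=> F [[[i0 _] Hi] [rho [rs rp]]] x.
have [_ HL] := Hi i0.
have [A [DA Ax [sigma [ss sp]]]] := HL x.
exists A; split => //.
exists (rho i0 \o sigma); split; first exact: smooth_comp ss (rs i0).
by move=> b /=; rewrite rp sp.
Qed.

Lemma sub1 : cov_sub (@T_suDld R) (@T_suDsu R).
Proof.
move=> X F [sF H]; split => // i; have [h1 h2] := H i.
by split => //; apply: suDld_suDsu.
Qed.

Lemma sub2 : cov_sub (@T_suDsu R) (@T_Dlsplit R).
Proof.
move=> X F [sF H]; split => // i; have [h1 h2] := H i.
exact: suDsu_Dlsplit.
Qed.

Lemma sub3 : cov_sub (@T_Dlsplit R) (@T_sudu R).
Proof.
move=> X F [sF H]; split => // i; exact: Dlsplit_subduction.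
Qed.

Lemma sub4 : cov_sub (@T_suDsu R) (@T_susu R).
Proof.
move=> X F [sF H]; split => // i; have [h1 h2] := H i.
by split => //; apply: suDsu_submersion.
Qed.

Lemma sub5 : cov_sub (@T_susu R) (@T_sudu R).
Proof.
move=> X F [sF H]; split => // i; have [h1 h2] := H i.
exact: susu_subduction.
Qed.

Lemma sub0 : cov_sub (@T_numDop R) (@T_Dop R).
Proof. by move=> X F []. Qed.

End Aux.

Theorem mainTheorem14 (R : realType) :
  cov_prec (@T_numDop R) (@T_Dop R) /\
  cov_sim (@T_Dop R) (@T_suDld R) /\
  cov_sub (@T_suDld R) (@T_suDsu R) /\ cov_sim (@T_suDld R) (@T_suDsu R) /\
  cov_sub (@T_suDsu R) (@T_Dlsplit R) /\ cov_sim (@T_suDsu R) (@T_Dlsplit R) /\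
  cov_sub (@T_Dlsplit R) (@T_sudu R) /\
  cov_sub (@T_suDsu R) (@T_susu R) /\ cov_sub (@T_susu R) (@T_sudu R).
Proof.
split; first exact: sub_prec sub0.
split.
  split => Y X p _ L; [exact: secdata_suDld _ _ _ (from_Dop L) |
                       exact: secdata_Dop _ _ _ (from_suDld L)].
split; first exact: sub1.
split.
  split; first exact: sub_prec sub1.
  move=> Y X p _ L; exact: secdata_suDld _ _ _ (from_Dlsplit (sub_ls sub2 L)).
split; first exact: sub2.
split.
  split; first exact: sub_prec sub2.
  move=> Y X p _ L; exact: sub_ls sub1 (secdata_suDld _ _ _ (from_Dlsplit L)).
split; first exact: sub3.
split; first exact: sub4.
exact: sub5.
Qed.
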